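(* A partial order is unary FA-presentable if and only if it is isomorphic to one obtained by propagating a unary FA-foundational partial order $(Q,\le)$ in which every seed $P_k=\{p^{(k)}_1,\dots,p^{(k)}_5\}$ is either an anti-chain (no two distinct $p^{(k)}_i$ comparable), an ascending chain ($p^{(k)}_1<p^{(k)}_2<p^{(k)}_3<p^{(k)}_4<p^{(k)}_5$), or a descending chain ($p^{(k)}_1>p^{(k)}_2>p^{(k)}_3>p^{(k)}_4>p^{(k)}_5$).
   Context: A structure is unary FA-presentable if there exist a regular language $L\subseteq a^*$ and a surjection $\phi:L\to X$ such that for equality and for the relation, the set of pairs $(u,v)\in L^2$ whose images are related is regular (i.e. the set of words $\mathrm{conv}(u,v)$ over $\{a,\$\}^2$, reading both words in parallel with the shorter padded by $\$$, is a regular language). A unary FA-foundational binary relation is a finite set $Q$ with a relation $\rho$ and pairwise disjoint five-element subsets (seeds) $P_k=\{p^{(k)}_1,\dots,p^{(k)}_5\}$, $0\le k\le n-1$ ($n\ge0$), such that with $Q'=Q\setminus\bigcup_k P_k$, for all $k,l$ (possibly equal) and $q\in Q'$: (1) the statements $p^{(k)}_i\rho p^{(l)}_i$ ($1\le i\le5$) are all true or all false; (2) the statements $p^{(k)}_i\rho p^{(l)}_{i+1}$ ($1\le i\le4$) are all true or all false; (3) the statements $p^{(k)}_{i+1}\rho p^{(l)}_i$ ($1\le i\le 4$) are all true or all false; (4) the statements $p^{(k)}_i\rho p^{(l)}_j$ with $j-i\ge2$ are all true or all false; (5) the statements $p^{(k)}_j\rho p^{(l)}_i$ with $j-i\ge2$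 are all true or all false; (6) the statements $q\rho p^{(k)}_i$ ($2\le i\le5$) are all true or all false; (7) the statements $p^{(k)}_i\rho q$ ($2\le i\le 5$) are all true or all false. A unary FA-foundational partial order is one in which $\rho$ is a partial order on $Q$. Propagation yields $(\hat Q,\hat\rho)$ with $\hat Q=Q'\cup\{p^{(k)}_i:0\le k<n,\ i\in\mathbb{N}\}$ ($\mathbb{N}=\{1,2,\dots\}$, new elements for $i\ge6$) and: $\hat\rho=\rho$ on $Q'$; $p^{(k)}_i\hat\rho p^{(l)}_j$ iff [$j=i$ and $p^{(k)}_1\rho p^{(l)}_1$] or [$j=i+1$ and $p^{(k)}_1\rho p^{(l)}_2$] or [$j=i-1$ and $p^{(k)}_2\rho p^{(l)}_1$] or [$j\ge i+2$ and $p^{(k)}_1\rho p^{(l)}_3$] or [$j\le i-2$ and $p^{(k)}_3\rho p^{(l)}_1$]; for $q\in Q'$: $q\hat\rho p^{(k)}_1$ iff $q\rho p^{(k)}_1$, $q\hat\rho p^{(k)}_i$ ($i\ge2$) iff $q\rho p^{(k)}_2$, $p^{(k)}_1\hat\rho q$ iff $p^{(k)}_1\rho q$, $p^{(k)}_i\hat\rho q$ ($i\ge2$) iff $p^{(k)}_2\rho q$. *)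

(* Defs.v *)
From mathcomp Require Import all_boot.
Set Implicit Arguments. Unset Strict Implicit. Unset Printing Implicit Defensive.

Record dfa (Sigma : Type) := DFA {
  dstate : finType;
  dstart : dstate;
  dstep : dstate -> Sigma -> dstate;
  dfinal : pred dstate }.

Definition dfa_accept (Sigma : Type) (A : dfa Sigma) (w : seq Sigma) : bool :=
  @dfinal _ A (foldl (@dstep _ A) (@dstart _ A) w).

Definition regular (Sigma : Type) (L : seq Sigma -> Prop) : Prop :=
  exists A : dfa Sigma, forall w, L w <-> dfa_accept A w.

(* convolution of two words; None plays the role of the padding symbol $ *)
Definition conv (Sigma : Type) (u v : seq Sigma) : seq (option Sigma * option Sigma) :=
  mkseq (fun i => (nth None (map Some u) i, nth None (map Some v) i))
        (maxn (size u) (size v)).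

Definition regular2 (Sigma : Type) (S : seq Sigma -> seq Sigma -> Prop) : Prop :=
  regular (fun w => exists u v, S u v /\ w = conv u v).

Definition unary_FA_presentable (X : Type) (R : X -> X -> Prop) : Prop :=
  exists (L : seq unit -> Prop) (phi : {u | L u} -> X),
    regular L /\
    (forall x, exists u, phi u = x) /\
    regular2 (fun u v => exists (hu : L u) (hv : L v),
                 phi (exist _ u hu) = phi (exist _ v hv)) /\
    regular2 (fun u v => exists (hu : L u) (hv : L v),
                 R (phi (exist _ u hu)) (phi (exist _ v hv))).

Definition partial_order (X : Type) (R : X -> X -> Prop) : Prop :=
  (forall x, R x x) /\ (forall x y, R x y -> R y x -> x = y) /\
  (forall x y z, R x y -> R y z -> R x z).

(* ---------- Unary FA-foundational relations ----------
   Seeds P_k = {p k 0, ..., p k 4} (0-based: p k i is p^{(k)}_{i+1}). *)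
Section Found.
Variables (Q : finType) (rho : rel Q) (n : nat) (p : 'I_n -> 'I_5 -> Q).

Definition seeds_disjoint : Prop :=
  injective (fun ki : 'I_n * 'I_5 => p ki.1 ki.2).

Definition inQ' (q : Q) : bool := [forall k, forall i, p k i != q].

Definition FA_foundational : Prop :=
  seeds_disjoint /\
  forall k l : 'I_n,
   (forall i j : 'I_5, rho (p k i) (p l i) = rho (p k j) (p l j)) /\
   (forall i i' j j' : 'I_5, i' = i.+1 :> nat -> j' = j.+1 :> nat ->
                rho (p k i) (p l i') = rho (p k j) (p l j')) /\
   (forall i i' j j' : 'I_5, i' = i.+1 :> nat -> j' = j.+1 :> nat ->
                rho (p k i') (p l i) = rho (p k j') (p l j)) /\
   (forall i j i' j' : 'I_5, i + 2 <= j -> i' + 2 <= j' ->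
                rho (p k i) (p l j) = rho (p k i') (p l j')) /\
   (forall i j i' j' : 'I_5, i + 2 <= j -> i' + 2 <= j' ->
                rho (p k j) (p l i) = rho (p k j') (p l i')) /\
   (forall q, inQ' q -> forall i j : 'I_5, 0 < i -> 0 < j ->
                rho q (p k i) = rho q (p k j)) /\
   (forall q, inQ' q -> forall i j : 'I_5, 0 < i -> 0 < j ->
                rho (p k i) q = rho (p k j) q).

Definition seed_antichain (k : 'I_n) : Prop :=
  forall i j : 'I_5, i != j -> ~~ rho (p k i) (p k j).
Definition seed_ascending (k : 'I_n) : Prop :=
  forall i i' : 'I_5, i' = i.+1 :> nat -> rho (p k i) (p k i') && (p k i != p k i').
Definition seed_descending (k : 'I_n) : Prop :=
  forall i i' : 'I_5, i' = i.+1 :> nat -> rho (p k i') (p k i) && (p k i' != p k i).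

(* ---------- Propagation ----------
   Elements: inl q for q in Q', inr (k, m) for p^{(k)}_{m+1}, m : nat. *)
Definition hatQ : Type := ({q : Q | inQ' q} + ('I_n * nat))%type.

Definition s0 : 'I_5 := @Ordinal 5 0 isT.
Definition s1 : 'I_5 := @Ordinal 5 1 isT.
Definition s2 : 'I_5 := @Ordinal 5 2 isT.

Definition hat_rho (x y : hatQ) : bool :=
  match x, y with
  | inl q, inl q' => rho (val q) (val q')
  | inr (k, m), inr (l, m') =>
      [|| (m' == m) && rho (p k s0) (p l s0),
          (m' == m.+1) && rho (p k s0) (p l s1),
          (m'.+1 == m) && rho (p k s1) (p l s0),
          (m.+2 <= m') && rho (p k s0) (p l s2)
        | (m'.+2 <= m) && rho (p k s2) (p l s0)]
  | inl q, inr (k, m) =>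
      if m == 0 then rho (val q) (p k s0) else rho (val q) (p k s1)
  | inr (k, m), inl q =>
      if m == 0 then rho (p k s0) (val q) else rho (p k s1) (val q)
  end.
End Found.

(* Main.v *)
Require Import Defs.
From Stdlib Require Import Classical ClassicalEpsilon ProofIrrelevance.
From mathcomp Require Import all_boot zify.
Set Implicit Arguments. Unset Strict Implicit. Unset Printing Implicit Defensive.

Notation SS := (Some tt, Some tt).
Notation SN := (Some tt, None).
Notation NS := (None, Some tt).

Lemma unary_nseq (u : seq unit) : u = nseq (size u) tt.
Proof. by elim: u => [|[] u IH] //=; rewrite -IH. Qed.

Lemma nth_some_nseq i t : nth None (map Some (nseq i tt)) t = if t < i then Some tt else None.
Proof.
case: ltnP => h.
  by rewrite (nth_map tt) ?size_nseq // nth_nseq h.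
by rewrite nth_default // size_map size_nseq.
Qed.

Lemma conv_nseq i j : conv (nseq i tt) (nseq j tt) =
  nseq (minn i j) SS ++ nseq (i - j) SN ++ nseq (j - i) NS.
Proof.
apply: (@eq_from_nth _ (None,None)).
  rewrite size_mkseq !size_cat !size_nseq; lia.
rewrite size_mkseq !size_nseq => t ht.
rewrite nth_mkseq; last by rewrite !size_nseq.
rewrite !nth_some_nseq nth_cat size_nseq nth_nseq nth_cat size_nseq nth_nseq nth_nseq.
by repeat case: ifP; move=> *; first [done | exfalso; lia].
Qed.

Lemma conv_inj i j i' j' :
  conv (nseq i tt) (nseq j tt) = conv (nseq i' tt) (nseq j' tt) -> i = i' /\ j = j'.
Proof.
move=> E.
have c1 : forall a b, count (fun x : option unit * option unit => x.1 != None) (conv (nseq a tt) (nseq b tt)) = a.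
  by move=> a b; rewrite conv_nseq !count_cat !count_nseq /=; lia.
have c2 : forall a b, count (fun x : option unit * option unit => x.2 != None) (conv (nseq a tt) (nseq b tt)) = b.
  by move=> a b; rewrite conv_nseq !count_cat !count_nseq /=; lia.
split; [by rewrite -(c1 i j) E c1 | by rewrite -(c2 i j) E c2].
Qed.

Lemma foldl_nseq (A B : Type) (f : A -> B -> A) s n x :
  foldl f s (nseq n x) = iter n (fun y => f y x) s.
Proof. by elim: n s => [|n IH] s //=; rewrite IH -iterSr. Qed.

Lemma iter_period (S : finType) (f : S -> S) x t :
  #|S| <= t -> iter (t + #|S|`!) f x = iter t f x.
Proof.
move=> ht.
have [a [b [hab [hb E]]]] : exists a b, a < b /\ b <= #|S| /\ iter a f x = iter b f x.
  apply: NNPP => hne.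
  have inj : injective (fun k : 'I_#|S|.+1 => iter k f x).
    move=> k1 k2 /= E12; apply/val_inj => /=.
    case: (ltngtP k1 k2) => // h.
      by exfalso; apply: hne; exists k1, k2; split=> //; split=> //; rewrite -ltnS.
    by exfalso; apply: hne; exists k2, k1; split=> //; split=> //; rewrite -ltnS.
  by have := leq_card _ inj; rewrite card_ord ltnn.
have per : forall s, a <= s -> iter (s + (b - a)) f x = iter s f x.
  move=> s hs; have -> : s + (b - a) = (s - a) + b by lia.
  by rewrite iterD -E -iterD; congr iter; lia.
have /dvdnP [q ->] : (b - a) %| #|S|`! by apply: dvdn_fact; apply/andP; split; lia.
elim: q => [|q IH]; first by rewrite addn0.
have -> : t + q.+1 * (b - a) = (t + q * (b - a)) + (b - a) by lia.
by rewrite per ?IH //; lia.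
Qed.

Definition per2 (S : nat -> nat -> bool) T N :=
  (forall i j, T <= i -> T <= j -> S (i + N) (j + N) = S i j) /\
  (forall i j, i + T <= j -> S i (j + N) = S i j) /\
  (forall i j, j + T <= i -> S (i + N) j = S i j).
Definition per1 (P : nat -> bool) T N := forall i, T <= i -> P (i + N) = P i.

Lemma per2_mul S T N q : per2 S T N -> per2 S T (N * q).
Proof.
move=> [P1 [P2 P3]]; elim: q => [|q [Q1 [Q2 Q3]]]; first by rewrite muln0; split; [|split]=> *; rewrite !addn0.
have E : forall a, a + N * q.+1 = (a + N * q) + N by move=> a; rewrite mulnS; lia.
split; [|split] => i j *; rewrite ?E.
- by rewrite P1 ?Q1 //; lia.
- by rewrite P2 ?Q2 //; lia.
- by rewrite P3 ?Q3 //; lia.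
Qed.

Lemma per2_T S T T' N : per2 S T N -> T <= T' -> per2 S T' N.
Proof. move=> [P1 [P2 P3]] h; split; [|split] => *; [apply: P1|apply: P2|apply: P3]; lia. Qed.

Lemma per1_mul P T N q : per1 P T N -> per1 P T (N * q).
Proof.
move=> P1; elim: q => [|q Q1] i hi; first by rewrite muln0 addn0.
have -> : i + N * q.+1 = (i + N * q) + N by rewrite mulnS; lia.
by rewrite P1 ?Q1 //; lia.
Qed.

Lemma per1_T P T T' N : per1 P T N -> T <= T' -> per1 P T' N.
Proof. move=> P1 h i hi; apply: P1; lia. Qed.

Definition acc2 (A : dfa (option unit * option unit)) i j :=
  dfa_accept A (conv (nseq i tt) (nseq j tt)).

Lemma acc2E A i j : acc2 A i j =
  dfinal (iter (j - i) (fun y => dstep y NS) (iter (i - j) (fun y => dstep y SN)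
     (iter (minn i j) (fun y => dstep y SS) (dstart A)))).
Proof. by rewrite /acc2 /dfa_accept conv_nseq !foldl_cat !foldl_nseq. Qed.

Lemma acc2_per A : per2 (acc2 A) #|dstate A| (#|dstate A|`!).
Proof.
split; [|split] => i j *; rewrite !acc2E.
- have -> : minn (i + #|dstate A|`!) (j + #|dstate A|`!) = minn i j + #|dstate A|`! by lia.
  have -> : i + #|dstate A|`! - (j + #|dstate A|`!) = i - j by lia.
  have -> : j + #|dstate A|`! - (i + #|dstate A|`!) = j - i by lia.
  by rewrite iter_period //; lia.
- have -> : minn i (j + #|dstate A|`!) = minn i j by lia.
  have -> : i - (j + #|dstate A|`!) = i - j by lia.
  have -> : j + #|dstate A|`! - i = (j - i) + #|dstate A|`! by lia.
  by rewrite iter_period //; lia.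
- have -> : minn (i + #|dstate A|`!) j = minn i j by lia.
  have -> : j - (i + #|dstate A|`!) = j - i by lia.
  have -> : i + #|dstate A|`! - j = (i - j) + #|dstate A|`! by lia.
  by rewrite iter_period //; lia.
Qed.

Lemma acc1_per (A : dfa unit) :
  per1 (fun i => dfa_accept A (nseq i tt)) #|dstate A| (#|dstate A|`!).
Proof. by move=> i hi; rewrite /dfa_accept !foldl_nseq iter_period. Qed.

Lemma nseqSr (A : Type) n (x : A) : nseq n.+1 x = rcons (nseq n x) x.
Proof. by elim: n => //= n <-. Qed.

Section Red.
Variables (T N : nat).
Hypothesis hN : 0 < N.

Definition red t := if t < T then t else T + (t - T) %% N.

Lemma red_lt t : red t < T + N.
Proof. rewrite /red; case: ifP => h; first by lia. by have := ltn_pmod (t - T) hN; lia. Qed.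

Lemma red_decomp t : T <= t -> T <= red t /\ t = red t + N * ((t - T) %/ N).
Proof.
move=> h; rewrite /red ltnNge h /=; split; first by lia.
by have := divn_eq (t - T) N; lia.
Qed.

Lemma red_small t : t < T -> red t = t.
Proof. by rewrite /red => ->. Qed.

Lemma redS t : red t.+1 = if (red t).+1 < T + N then (red t).+1 else T.
Proof.
rewrite /red; case: (ltnP t.+1 T) => h1.
  by rewrite ifT ?ifT //; lia.
case: (ltnP t T) => h2.
  have -> : t.+1 - T = 0 by lia.
  by rewrite mod0n ifT; lia.
have -> : t.+1 - T = (t - T).+1 by lia.
have E := divn_eq (t - T) N; have hr := ltn_pmod (t - T) hN.
set q := (t - T) %/ N in E *; set r := (t - T) %% N in E hr *.
have -> : (t - T).+1 = q * N + r.+1 by lia.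
rewrite modnMDl; case: (ltnP r.+1 N) => h3.
  by rewrite modn_small // ifT //; lia.
have -> : r.+1 = N by lia.
by rewrite modnn ifF //; lia.
Qed.

Section Shift.
Variable S : nat -> nat -> bool.
Hypothesis hS : per2 S T N.

Lemma shift1 i j q : T <= i -> T <= j -> S (i + N * q) (j + N * q) = S i j.
Proof. by move=> *; case: (per2_mul q hS) => [P1 _]; apply: P1. Qed.
Lemma shift2 i j q : i + T <= j -> S i (j + N * q) = S i j.
Proof. by move=> *; case: (per2_mul q hS) => [_ [P2 _]]; apply: P2. Qed.
Lemma shift3 i j q : j + T <= i -> S (i + N * q) j = S i j.
Proof. by move=> *; case: (per2_mul q hS) => [_ [_ P3]]; apply: P3. Qed.

Lemma red_le i j : i <= j -> S i j = S (red i) (red i + red (j - i)).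
Proof.
move=> hij.
have step1 : S i j = S (red i) (red i + (j - i)).
  case: (ltnP i T) => hi; first by rewrite red_small //; congr S; lia.
  have [h1 h2] := red_decomp hi.
  rewrite -(@shift1 _ _ ((i - T) %/ N) h1); last by lia.
  congr S; lia.
rewrite step1; case: (ltnP (j - i) T) => hd; first by rewrite (red_small hd).
have [h1 h2] := red_decomp hd.
rewrite {1}h2 addnA shift2 //; lia.
Qed.

Lemma red_ge i j : j <= i -> S i j = S (red (i - j) + red j) (red j).
Proof.
move=> hij.
have step1 : S i j = S ((i - j) + red j) (red j).
  case: (ltnP j T) => hj; first by rewrite red_small //; congr S; lia.
  have [h1 h2] := red_decomp hj.
  rewrite -(@shift1 _ _ ((j - T) %/ N) _ h1); last by lia.
  congr S; lia.
rewrite step1; case: (ltnP (i - j) T) => hd; first by rewrite (red_small hd).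
have [h1 h2] := red_decomp hd.
have -> : i - j + red j = (red (i - j) + red j) + N * ((i - j - T) %/ N) by lia.
rewrite shift3 //; lia.
Qed.
End Shift.

Lemma red_per1 P t : per1 P T N -> P t = P (red t).
Proof.
move=> hP; case: (ltnP t T) => h; first by rewrite red_small.
have [h1 h2] := red_decomp h; rewrite {1}h2.
elim: ((t - T) %/ N) => [|q IH]; first by rewrite muln0 addn0.
by rewrite mulnS (addnC N) addnA hP // -?IH //; lia.
Qed.

Definition C := 'I_(T + N).+1.
Definition inc (x : C) : C := inord (if x.+1 < T + N then x.+1 else T).

Lemma iter_inc t : (iter t inc ord0 : nat) = red t.
Proof.
elim: t => [|t IH]; first by rewrite /red /=; case: ifP => // h; rewrite sub0n mod0n; lia.
rewrite iterS /inc inordK IH ?redS //.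
by case: (ltnP (red t).+1 (T + N)) => h; lia.
Qed.


Lemma red0 : red 0 = 0.
Proof. rewrite /red; case: (ltnP 0 T) => // h; rewrite sub0n mod0n; lia. Qed.

Definition ph0 : 'I_3 := @Ordinal 3 0 isT.
Definition ph1 : 'I_3 := @Ordinal 3 1 isT.
Definition ph2 : 'I_3 := @Ordinal 3 2 isT.

Notation st2 := (option ('I_3 * C * C)).

Definition step2 (s : st2) (z : option unit * option unit) : st2 :=
  match s with
  | None => None
  | Some (ph, x, y) =>
      match z with
      | (Some _, Some _) => if val ph == 0 then Some (ph, inc x, y) else None
      | (Some _, None) => if val ph != 2 then Some (ph1, x, inc y) else None
      | (None, Some _) => if val ph != 1 then Some (ph2, x, inc y) else None
      | (None, None) => None
      end
  end.

Definition start2 : st2 := Some (ph0, ord0, ord0).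

Lemma iter_SS k x y :
  iter k (fun s => step2 s SS) (Some (ph0, x, y)) = Some (ph0, iter k inc x, y).
Proof. by elim: k => //= k ->. Qed.

Lemma iter_SN k ph x y : val ph != 2 ->
  iter k.+1 (fun s => step2 s SN) (Some (ph, x, y)) = Some (ph1, x, iter k.+1 inc y).
Proof. by move=> h; elim: k => [|k IH]; [rewrite /= h | rewrite iterS IH]. Qed.

Lemma iter_NS k ph x y : val ph != 1 ->
  iter k.+1 (fun s => step2 s NS) (Some (ph, x, y)) = Some (ph2, x, iter k.+1 inc y).
Proof. by move=> h; elim: k => [|k IH]; [rewrite /= h | rewrite iterS IH]. Qed.

Lemma run2 i j : foldl step2 start2 (conv (nseq i tt) (nseq j tt)) =
  Some (if i == j then ph0 else if j < i then ph1 else ph2,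
        iter (minn i j) inc ord0, iter ((i - j) + (j - i)) inc ord0).
Proof.
rewrite conv_nseq !foldl_cat !foldl_nseq iter_SS.
case: (ltngtP i j) => h.
- have -> : i - j = 0 by lia.
  have -> : j - i = (j - i).-1.+1 by lia.
  by rewrite iter_NS.
- have -> : j - i = 0 by lia.
  have -> : i - j = (i - j).-1.+1 by lia.
  by rewrite iter_SN //= addn0.
- by subst j; rewrite subnn.
Qed.

Lemma conv_rcons_SS i : rcons (conv (nseq i tt) (nseq i tt)) SS = conv (nseq i.+1 tt) (nseq i.+1 tt).
Proof. by rewrite !conv_nseq !minnn !subnn !cats0 -nseqSr. Qed.

Lemma conv_rcons_SN i j : j <= i -> rcons (conv (nseq i tt) (nseq j tt)) SN = conv (nseq i.+1 tt) (nseq j tt).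
Proof.
move=> h; rewrite !conv_nseq.
have -> : minn i.+1 j = j by lia. have -> : minn i j = j by lia.
have -> : j - i = 0 by lia. have -> : j - i.+1 = 0 by lia. have -> : i.+1 - j = (i - j).+1 by lia.
by rewrite !cats0 rcons_cat -nseqSr.
Qed.

Lemma conv_rcons_NS i j : i <= j -> rcons (conv (nseq i tt) (nseq j tt)) NS = conv (nseq i tt) (nseq j.+1 tt).
Proof.
move=> h; rewrite !conv_nseq.
have -> : minn i j.+1 = i by lia. have -> : minn i j = i by lia.
have -> : i - j = 0 by lia. have -> : i - j.+1 = 0 by lia. have -> : j.+1 - i = (j - i).+1 by lia.
by rewrite !rcons_cat -nseqSr.
Qed.

Lemma run2_inv w s : foldl step2 start2 w = Some s -> exists i j, w = conv (nseq i tt) (nseq j tt).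
Proof.
elim/last_ind: w s => [|w z IH] s.
  by move=> _; exists 0, 0; rewrite conv_nseq.
rewrite foldl_rcons.
case E: (foldl step2 start2 w) => [s'|] //.
have [i [j Ew]] := IH _ E.
move: E; rewrite Ew run2 => [[<-]] /=.
case: z => [[[]|] [[]|]] //=.
- case: (i =P j) => [e|nij]; last by case: (ltnP j i).
  by subst j => _; exists i.+1, i.+1; rewrite conv_rcons_SS.
- case: (i =P j) => [e|nij].
    by subst j => _; exists i.+1, i; rewrite conv_rcons_SN.
  case: (ltnP j i) => h //= _.
  by exists i.+1, j; rewrite conv_rcons_SN // ltnW.
- case: (i =P j) => [e|nij].
    by subst j => _; exists i, i.+1; rewrite conv_rcons_NS.
  case: (ltnP j i) => h //= _.
  by exists i, j.+1; rewrite conv_rcons_NS //; lia.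
Qed.

Section D2.
Variable S : nat -> nat -> bool.
Hypothesis hS : per2 S T N.

Definition fin2 (s : st2) : bool :=
  match s with
  | Some (ph, x, y) => if val ph == 0 then S x x else if val ph == 1 then S (y + x) x else S x (x + y)
  | None => false
  end.

Lemma fin2_run i j : fin2 (foldl step2 start2 (conv (nseq i tt) (nseq j tt))) = S i j.
Proof.
rewrite run2 /= !iter_inc.
case: (ltngtP i j) => h /=.
- have -> : i - j + (j - i) = j - i by lia.
  by rewrite (red_le hS (ltnW h)).
- have -> : i - j + (j - i) = i - j by lia.
  by rewrite (red_ge hS (ltnW h)).
- by subst j; rewrite (red_le hS (leqnn i)) subnn red0 addn0.
Qed.

Lemma dfa2_ok : exists A : dfa (option unit * option unit),
  forall w, (exists i j, S i j /\ w = conv (nseq i tt) (nseq j tt)) <-> dfa_accept A w.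
Proof.
exists (@DFA _ st2 start2 step2 fin2) => w; rewrite /dfa_accept /=; split.
  by move=> [i [j [hij ->]]]; rewrite fin2_run.
case E: (foldl step2 start2 w) => [s|] //= hf.
have [i [j Ew]] := run2_inv E.
by exists i, j; split=> //; rewrite -fin2_run -Ew E.
Qed.
End D2.

Lemma dfa1_ok (P : nat -> bool) : per1 P T N ->
  exists A : dfa unit, forall w, P (size w) <-> dfa_accept A w.
Proof.
move=> hP; exists (@DFA _ C ord0 (fun x _ => inc x) (fun x : C => P x)) => w.
rewrite /dfa_accept /= {2}(unary_nseq w) foldl_nseq iter_inc -red_per1 //.
Qed.

End Red.

Lemma reg2_of (Rel : seq unit -> seq unit -> Prop) (S : nat -> nat -> bool) T N :
  0 < N -> per2 S T N -> (forall i j, Rel (nseq i tt) (nseq j tt) <-> S i j) -> regular2 Rel.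
Proof.
move=> hN hS hE; have [A hA] := dfa2_ok hN hS; exists A => w; rewrite -hA; split.
  move=> [u [v [huv ->]]]; exists (size u), (size v); rewrite -hE -!unary_nseq; split=> //.
move=> [i [j [hij ->]]]; exists (nseq i tt), (nseq j tt); split=> //; exact/hE.
Qed.

Lemma reg1_of (L : seq unit -> Prop) (P : nat -> bool) T N :
  0 < N -> per1 P T N -> (forall i, L (nseq i tt) <-> P i) -> regular L.
Proof.
move=> hN hP hE; have [A hA] := dfa1_ok hN hP; exists A => w.
by rewrite -hA (unary_nseq w) hE size_nseq.
Qed.

Lemma of_reg2 (Rel : seq unit -> seq unit -> Prop) : regular2 Rel ->
  exists A, forall i j, Rel (nseq i tt) (nseq j tt) <-> acc2 A i j.
Proof.
move=> [A hA]; exists A => i j; rewrite /acc2 -hA; split.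
  by move=> h; exists (nseq i tt), (nseq j tt).
move=> [u [v [huv E]]]; rewrite (unary_nseq u) (unary_nseq v) in huv E.
by have [-> ->] := conv_inj E.
Qed.

Lemma of_reg1 (L : seq unit -> Prop) : regular L ->
  exists A : dfa unit, forall i, L (nseq i tt) <-> dfa_accept A (nseq i tt).
Proof. by move=> [A hA]; exists A. Qed.

Definition oget (A : Type) (o : option A) : isSome o -> A :=
  match o return isSome o -> A with
  | Some a => fun _ => a
  | None => fun h => False_rect A (Bool.diff_false_true h)
  end.

Lemma oget_eq (A : Type) (o : option A) h a : o = Some a -> @oget A o h = a.
Proof. by move=> E; move: h; rewrite E. Qed.
Ltac decide_nat := repeat match goal with
 | |- context [?a == ?b] => first [ rewrite (_ : (a == b) = true); last by apply/eqP; lia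
                                         | rewrite (_ : (a == b) = false); last by apply/eqP; lia ]
 | |- context [?a <= ?b] => first [ rewrite (_ : (a <= b) = true); last by lia
                                  | rewrite (_ : (a <= b) = false); last by apply/negbTE; rewrite -ltnNge; lia ]
 end.

Section Hat.
Variables (Q : finType) (rho : rel Q) (n : nat) (p : 'I_n -> 'I_5 -> Q).
Notation hr := (@hat_rho Q rho n p).
Lemma hat_eq k l m m' : m' = m -> hr (inr (k, m)) (inr (l, m')) = rho (p k s0) (p l s0).
Proof. by move=> h; rewrite /=; decide_nat; rewrite /= ?orbF. Qed.
Lemma hat_up k l m m' : m' = m.+1 -> hr (inr (k, m)) (inr (l, m')) = rho (p k s0) (p l s1).
Proof. by move=> h; rewrite /=; decide_nat; rewrite /= ?orbF. Qed.
Lemma hat_dn k l m m' : m'.+1 = m -> hr (inr (k, m)) (inr (l, m')) = rho (p k s1) (p l s0).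
Proof. by move=> h; rewrite /=; decide_nat; rewrite /= ?orbF. Qed.
Lemma hat_far k l m m' : m.+2 <= m' -> hr (inr (k, m)) (inr (l, m')) = rho (p k s0) (p l s2).
Proof. by move=> h; rewrite /=; decide_nat; rewrite /= ?orbF. Qed.
Lemma hat_farl k l m m' : m'.+2 <= m -> hr (inr (k, m)) (inr (l, m')) = rho (p k s2) (p l s0).
Proof. by move=> h; rewrite /=; decide_nat; rewrite /= ?orbF. Qed.
Lemma hat_shift k l m m' : hr (inr (k, m.+1)) (inr (l, m'.+1)) = hr (inr (k, m)) (inr (l, m')).
Proof. by rewrite /= !eqSS !ltnS. Qed.
End Hat.

Section Back.
Variables (Q : finType) (rho : rel Q) (n : nat) (p : 'I_n -> 'I_5 -> Q).
Notation Qp := {q : Q | inQ' p q}.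
Definition cB := #|{: Qp}|.
Definition decode (i : nat) : option (hatQ p) :=
  match (insub i : option 'I_cB) with
  | Some o => Some (inl (enum_val o))
  | None => match (insub ((i - cB) %% n) : option 'I_n) with
            | Some k => Some (inr (k, (i - cB) %/ n))
            | None => None end end.
Definition enc (a : hatQ p) : nat :=
  match a with inl q => enum_rank q | inr (k, m) => cB + k + n * m end.
Lemma decode_enc a : decode (enc a) = Some a.
Proof.
case: a => [q|[k m]] /=.
  by rewrite /decode (valK (enum_rank q : 'I_cB)) enum_rankK.
rewrite /decode insubF; last by apply/negbTE; rewrite -leqNgt; lia.
have -> : cB + k + n * m - cB = m * n + k by lia.
rewrite modnMDl modn_small // (valK k) divnMDl; last by case: n k {m} => [[]|].
by rewrite divn_small // addn0.
Qed.

Lemma decode_inv i a : decode i = Some a -> enc a = i.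
Proof.
rewrite /decode; case: insubP => [o ho vo [<-]|hi].
  by rewrite /= enum_valK.
case: insubP => [k hk vk [<-]|] //=.
rewrite -[nat_of_ord k]/(val k) vk; have := divn_eq (i - cB) n; rewrite -leqNgt in hi; lia.
Qed.

Lemma decode_ge i : cB <= i -> decode i = omap (fun k => inr (k, (i - cB) %/ n)) (insub ((i - cB) %% n) : option 'I_n).
Proof.
move=> h; rewrite /decode insubF; last by apply/negbTE; rewrite -leqNgt.
by case: insub.
Qed.

Lemma enc_inl q : enc (inl q) < cB.
Proof. exact: ltn_ord. Qed.

Lemma dec_cases i : decode i = None \/ exists a, enc a = i.
Proof. by case E: (decode i) => [a|]; [right; exists a; exact: decode_inv | left]. Qed.

Lemma dec_big i : cB <= i -> (n = 0 /\ decode i = None) \/ (0 < n /\ exists k m, enc (inr (k, m)) = i).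
Proof.
move=> h; case: (dec_cases i) => [E|[[q|[k m]] E]].
- case: (posnP n) => hn; [by left|right; split=> //].
  exists (Ordinal (ltn_pmod (i - cB) hn)), ((i - cB) %/ n) => /=.
  by have := divn_eq (i - cB) n; lia.
- by have := enc_inl q; lia.
- by right; split; [case: (n) k {E} => [[]|] | exists k, m].
Qed.

Definition SR i j := match decode i, decode j with Some a, Some b => hat_rho rho a b | _, _ => false end.
Definition NB := n + (n == 0).
Definition TB := cB + 3 * n + 1.

Lemma SR_enc a b : SR (enc a) (enc b) = hat_rho rho a b.
Proof. by rewrite /SR !decode_enc. Qed.

Lemma enc_shift k m : enc (inr (k, m)) + n = enc (inr (k, m.+1)).
Proof. rewrite /= mulnS; lia. Qed.

Lemma SR_per : per2 SR TB NB.
Proof.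
have NBn : 0 < n -> NB = n by rewrite /NB => h; rewrite (negbTE (lt0n_neq0 h)) addn0.
have dN0 : n = 0 -> forall i, cB <= i -> decode i = None.
  move=> h0 i hi; case: (dec_big hi) => [[_ ->] | [h1 _]] //; lia.
split; [|split].
- move=> i j hi hj; rewrite /TB in hi hj; case: (posnP n) => hn.
    by rewrite /SR !dN0 //; lia.
  rewrite NBn //.
  have hci : cB <= i by lia.
  case: (dec_big hci) => [[h0 _]|[_ [k [m <-]]]]; first lia.
  have hcj : cB <= j by lia.
  case: (dec_big hcj) => [[h0 _]|[_ [l [m' <-]]]]; first lia.
  by rewrite !enc_shift !SR_enc hat_shift.
- move=> i j hi; rewrite /TB in hi.
  case: (posnP n) => hn.
    by rewrite /SR (dN0 hn j) ?(dN0 hn (j + NB)) //; [case: (decode i)|]; lia.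
  rewrite NBn //.
  have hcj : cB <= j by lia.
  case: (dec_big hcj) => [[h0 _]|[_ [l [m' Ej]]]]; first lia.
  rewrite -Ej enc_shift.
  case: (dec_cases i) => [Ei|[[q|[k m]] Ei]].
  + by rewrite /SR Ei.
  + rewrite -Ei !SR_enc /=; move: Ej => /= Ej.
    have -> : (m' == 0) = false by apply/eqP; have := ltn_ord l; nia.
    done.
  + rewrite -Ei !SR_enc.
    have hm : m.+2 <= m' by move: Ej Ei => /= Ej Ei; have := ltn_ord l; have := ltn_ord k; nia.
    by rewrite !hat_far //; lia.
- move=> i j hj; rewrite /TB in hj.
  case: (posnP n) => hn.
    by rewrite /SR (dN0 hn i) ?(dN0 hn (i + NB)) //; lia.
  rewrite NBn //.
  have hci : cB <= i by lia.
  case: (dec_big hci) => [[h0 _]|[_ [k [m Ei]]]]; first lia.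
  rewrite -Ei enc_shift.
  case: (dec_cases j) => [Ej|[[q|[l m']] Ej]].
  + by rewrite /SR Ej !decode_enc.
  + rewrite -Ej !SR_enc /=; move: Ei => /= Ei.
    have -> : (m == 0) = false by apply/eqP; have := ltn_ord k; nia.
    done.
  + rewrite -Ej !SR_enc.
    have hm : m'.+2 <= m by move: Ej Ei => /= Ej Ei; have := ltn_ord l; have := ltn_ord k; nia.
    by rewrite !hat_farl //; lia.
Qed.

Definition LB i := isSome (decode i).
Definition SE i j := (i == j) && LB i.

Lemma NB_gt0 : 0 < NB.
Proof. by rewrite /NB; case: (n). Qed.

Lemma LB_per : per1 LB TB NB.
Proof.
move=> i hi; rewrite /TB in hi.
have hci : cB <= i by lia.
case: (dec_big hci) => [[h0 E]|[hn [k [m Ei]]]].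
  rewrite /LB E; have hc' : cB <= i + NB by lia.
  by case: (dec_big hc') => [[_ ->]|[]] //; lia.
have -> : NB = n by rewrite /NB (negbTE (lt0n_neq0 hn)) addn0.
by rewrite /LB -Ei enc_shift !decode_enc.
Qed.

Lemma SE_per : per2 SE TB NB.
Proof.
have h1 := NB_gt0.
split; [|split] => i j.
- by move=> hi hj; rewrite /SE eqn_add2r LB_per.
- move=> h; rewrite /TB in h; rewrite /SE.
  have -> : (i == j + NB) = false by apply/eqP; lia.
  have -> : (i == j) = false by apply/eqP; lia.
  done.
- move=> h; rewrite /TB in h; rewrite /SE.
  have -> : (i + NB == j) = false by apply/eqP; lia.
  have -> : (i == j) = false by apply/eqP; lia.
  done.
Qed.
Lemma back (X : Type) (R : X -> X -> Prop) (f : X -> hatQ p) :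
  bijective f -> (forall x y, R x y <-> hat_rho rho (f x) (f y)) -> unary_FA_presentable R.
Proof.
case=> g fg gf hR.
pose L := fun u : seq unit => is_true (LB (size u)).
pose phi := fun u : {u | L u} => g (@oget _ (decode (size (val u))) (valP u)).
have phiE : forall u (hu : L u) a, decode (size u) = Some a -> phi (exist _ u hu) = g a.
  by move=> u hu a E; rewrite /phi /=; congr g; apply: oget_eq.
have Lget : forall i (hu : L (nseq i tt)), exists a, decode i = Some a.
  move=> i; rewrite /L /LB size_nseq; case: (decode i) => // a _; by exists a.
have Lmk : forall i a, decode i = Some a -> L (nseq i tt).
  by move=> i a E; rewrite /L /LB size_nseq E.
exists L, phi; split; [|split; [|split]].
- apply: (@reg1_of _ LB TB NB NB_gt0 LB_per) => i; by rewrite /L size_nseq.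
- move=> x; have hu := Lmk _ _ (decode_enc (f x)).
  by exists (exist _ _ hu); rewrite (phiE _ _ (f x)) ?size_nseq ?decode_enc.
- apply: (@reg2_of _ SE TB NB NB_gt0 SE_per) => i j; split.
    move=> [hu [hv E]].
    have [a Ea] := Lget _ hu; have [b Eb] := Lget _ hv.
    rewrite (phiE _ _ a) ?size_nseq // (phiE _ _ b) ?size_nseq // in E.
    have eab : a = b by rewrite -(gf a) -(gf b) E.
    subst b; have <- := decode_inv Ea; have <- := decode_inv Eb.
    by rewrite /SE eqxx /LB decode_enc.
  move=> /andP [/eqP <- hl]; move: hl; rewrite /LB; case E: (decode i) => [a|] // _.
  by have hu := Lmk _ _ E; exists hu, hu.
- apply: (@reg2_of _ SR TB NB NB_gt0 SR_per) => i j; split.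
    move=> [hu [hv E]].
    have [a Ea] := Lget _ hu; have [b Eb] := Lget _ hv.
    rewrite (phiE _ _ a) ?size_nseq // (phiE _ _ b) ?size_nseq // in E.
    by move/hR: E; rewrite !gf /SR Ea Eb.
  rewrite /SR; case Ea: (decode i) => [a|] //; case Eb: (decode j) => [b|] // h.
  exists (Lmk _ _ Ea), (Lmk _ _ Eb).
  by rewrite (phiE _ _ a) ?size_nseq // (phiE _ _ b) ?size_nseq // hR !gf.
Qed.
End Back.

Lemma per1_shift P T N a q : per1 P T N -> T <= a -> P (a + N * q) = P a.
Proof. by move=> h ha; apply: (per1_mul q h). Qed.

Section Fwd.
Variables (X : Type) (R : X -> X -> Prop).
Hypothesis hPO : partial_order R.
Variables (L : seq unit -> Prop) (phi : {u | L u} -> X).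
Variables (AL : dfa unit) (AE AR : dfa (option unit * option unit)).
Hypothesis hAL : forall i, L (nseq i tt) <-> dfa_accept AL (nseq i tt).
Hypothesis hAE : forall i j, (exists hu hv, phi (exist _ (nseq i tt) hu) = phi (exist _ (nseq j tt) hv)) <-> acc2 AE i j.
Hypothesis hAR : forall i j, (exists hu hv, R (phi (exist _ (nseq i tt) hu)) (phi (exist _ (nseq j tt) hv))) <-> acc2 AR i j.
Hypothesis hsurj : forall x, exists u, phi u = x.

Definition Lb i := dfa_accept AL (nseq i tt).
Definition Eb := acc2 AE.
Definition Rb := acc2 AR.
Definition K := #|dstate AL|`! * #|dstate AE|`! * #|dstate AR|`!.
Definition T := #|dstate AL| + #|dstate AE| + #|dstate AR|.

Lemma K_gt0 : 0 < K.
Proof. by rewrite /K !muln_gt0 !fact_gt0. Qed.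

Lemma Lb_per : per1 Lb T K.
Proof.
apply: (@per1_T _ #|dstate AL|); last by rewrite /T; lia.
have -> : K = #|dstate AL|`! * (#|dstate AE|`! * #|dstate AR|`!) by rewrite /K mulnA.
rewrite /Lb; exact: (@per1_mul _ _ _ _ (@acc1_per AL)).
Qed.

Lemma Eb_per : per2 Eb T K.
Proof.
apply: (@per2_T _ #|dstate AE|); last by rewrite /T; lia.
have -> : K = #|dstate AE|`! * (#|dstate AL|`! * #|dstate AR|`!) by rewrite /K; lia.
rewrite /Eb; exact: (@per2_mul _ _ _ _ (@acc2_per AE)).
Qed.

Lemma Rb_per : per2 Rb T K.
Proof.
apply: (@per2_T _ #|dstate AR|); last by rewrite /T; lia.
have -> : K = #|dstate AR|`! * (#|dstate AL|`! * #|dstate AE|`!) by rewrite /K; lia.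
rewrite /Rb; exact: (@per2_mul _ _ _ _ (@acc2_per AR)).
Qed.

Definition xof i (h : Lb i) : X := phi (exist _ (nseq i tt) (proj2 (hAL i) h)).

Lemma xof_any i (hu : L (nseq i tt)) (h : Lb i) : phi (exist _ (nseq i tt) hu) = xof h.
Proof. by rewrite /xof; congr phi; congr exist; apply: proof_irrelevance. Qed.

Lemma xof_irr i (h1 h2 : Lb i) : xof h1 = xof h2.
Proof. by congr xof; apply: proof_irrelevance. Qed.

Lemma Eb_Lb i j : Eb i j -> Lb i /\ Lb j.
Proof. by move/hAE => [hu [hv _]]; split; apply/hAL. Qed.
Lemma Rb_Lb i j : Rb i j -> Lb i /\ Lb j.
Proof. by move/hAR => [hu [hv _]]; split; apply/hAL. Qed.

Lemma EbP i j (hi : Lb i) (hj : Lb j) : Eb i j <-> xof hi = xof hj.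
Proof.
rewrite /Eb -hAE; split.
  by move=> [hu [hv E]]; rewrite -(xof_any hu) -(xof_any hv).
by move=> E; exists (proj2 (hAL i) hi), (proj2 (hAL j) hj).
Qed.

Lemma RbP i j (hi : Lb i) (hj : Lb j) : Rb i j <-> R (xof hi) (xof hj).
Proof.
rewrite /Rb -hAR; split.
  by move=> [hu [hv E]]; rewrite -(xof_any hu) -(xof_any hv).
by move=> E; exists (proj2 (hAL i) hi), (proj2 (hAL j) hj).
Qed.

Lemma Eb_refl i : Lb i -> Eb i i.
Proof. by move=> h; apply/(EbP h h). Qed.
Lemma Eb_sym i j : Eb i j -> Eb j i.
Proof. move=> e; have [hi hj] := Eb_Lb e; move/(EbP hi hj): e => e; exact/(EbP hj hi). Qed.
Lemma Eb_trans i j k : Eb i j -> Eb j k -> Eb i k.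
Proof.
move=> e1 e2; have [hi hj] := Eb_Lb e1; have [_ hk] := Eb_Lb e2.
move/(EbP hi hj): e1 => e1; move/(EbP hj hk): e2 => e2; apply/(EbP hi hk); congruence.
Qed.

Definition rep i := Lb i && all (fun j => ~~ (Lb j && Eb j i)) (iota 0 i).

Lemma repP i : reflect (Lb i /\ forall j, j < i -> ~~ (Lb j && Eb j i)) (rep i).
Proof.
apply: (iffP andP) => [[h /allP a]|[h a]]; split=> //.
  by move=> j hj; apply: a; rewrite mem_iota.
by apply/allP => j; rewrite mem_iota => /andP [_ hj]; apply: a.
Qed.

Lemma rep_Lb i : rep i -> Lb i.
Proof. by case/andP. Qed.

Lemma rep_uniq i j : rep i -> rep j -> Eb i j -> i = j.
Proof.
move=> /repP [hi ai] /repP [hj aj] e.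
case: (ltngtP i j) => // h.
  by move: (aj _ h); rewrite hi e.
by move: (ai _ h); rewrite hj (Eb_sym e).
Qed.

Definition TR := K + 2 * T.

Lemma rep_per : per1 rep TR K.
Proof.
have hK := K_gt0; have [P1 [P2 P3]] := Eb_per.
move=> i hi; rewrite /TR in hi.
apply/idP/idP => /repP [hl ha]; apply/repP.
- split; first by rewrite -Lb_per //; lia.
  move=> j hj; apply/negP => /andP [lj ej].
  case: (ltnP j T) => hjT.
    have : ~~ (Lb j && Eb j (i + K)) by apply: ha; lia.
    by rewrite lj P2 ?ej //; lia.
  have : ~~ (Lb (j + K) && Eb (j + K) (i + K)) by apply: ha; lia.
  by rewrite Lb_per // P1 ?lj ?ej //; lia.
- split; first by rewrite Lb_per //; lia.
  move=> j hj; apply/negP => /andP [lj ej].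
  case: (ltnP j (K + T)) => hjT.
    have : ~~ (Lb j && Eb j i) by apply: ha; lia.
    by rewrite lj -(P2 j i) ?ej //; lia.
  have E : j = (j - K) + K by lia.
  have : ~~ (Lb (j - K) && Eb (j - K) i) by apply: ha; lia.
  have e1 : Lb (j - K) = Lb j by rewrite {2}E Lb_per //; lia.
  have e2 : Eb (j - K) i = Eb j (i + K) by rewrite {2}E P1 //; lia.
  by rewrite e1 e2 lj ej.
Qed.


Definition B := TR.
Definition N := K * T.+1.
Lemma N_gt : T < N.
Proof. have := K_gt0; rewrite /N; nia. Qed.
Lemma N_gt0 : 0 < N.
Proof. have := N_gt; lia. Qed.
Lemma BT : T <= B.
Proof. rewrite /B /TR; lia. Qed.

Lemma RbN : per2 Rb T N.
Proof. exact: (@per2_mul _ _ _ _ Rb_per). Qed.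
Lemma repN : per1 rep B N.
Proof. exact: (@per1_mul _ _ _ _ rep_per). Qed.

Definition M := B + 5 * N.
Notation Qt := {i : 'I_M | rep i}.
Definition rhoQ : rel Qt := fun a b => Rb (val (val a)) (val (val b)).
Definition rs := [seq r <- iota 0 N | rep (B + r)].
Definition nS := size rs.
Definition rk (k : 'I_nS) := nth 0 rs k.

Lemma rk_mem k : rk k \in rs.
Proof. exact: mem_nth (ltn_ord k). Qed.
Lemma rk_lt k : rk k < N.
Proof. by have := rk_mem k; rewrite mem_filter mem_iota => /andP [_ /andP [_ h]]; lia. Qed.
Lemma rk_rep k : rep (B + rk k).
Proof. by have := rk_mem k; rewrite mem_filter => /andP [h _]. Qed.
Lemma rk_inj : injective rk.
Proof.
move=> k l E; apply/val_inj/eqP; rewrite -(nth_uniq 0 (ltn_ord k) (ltn_ord l)).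
  by apply/eqP.
exact: filter_uniq (iota_uniq 0 N).
Qed.

Definition pn (k : 'I_nS) (i : nat) := B + rk k + N * i.
Lemma pn_rep k i : rep (pn k i).
Proof. by rewrite /pn (@per1_shift rep B N (B + rk k) i repN) ?rk_rep //; lia. Qed.
Lemma pn_lt k (i : 'I_5) : pn k i < M.
Proof. have := rk_lt k; have := ltn_ord i; rewrite /pn /M; nia. Qed.
Definition pQ k i : Qt := exist _ (Ordinal (pn_lt k i)) (pn_rep k i).

Lemma pn_inj k l i j : pn k i = pn l j -> k = l /\ i = j.
Proof.
rewrite /pn => E.
have hk := rk_lt k; have hl := rk_lt l; have hN := N_gt0.
have E2 : rk k + N * i = rk l + N * j by lia.
have ekl : rk k = rk l.
  have := congr1 (fun z => z %% N) E2; rewrite /= !(mulnC N) !(addnC (rk _)) !modnMDl !modn_small //.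
have -> : k = l by apply: rk_inj.
by split=> //; rewrite ekl in E2; nia.
Qed.

Lemma seed_of v : B <= v -> rep v -> exists k i, pn k i = v.
Proof.
move=> hv rv; have hN := N_gt0.
set r := (v - B) %% N; set i := (v - B) %/ N.
have Ev : v = B + r + N * i by rewrite /r /i; have := divn_eq (v - B) N; lia.
have rr : rep (B + r) by rewrite -(@per1_shift rep B N (B + r) i repN) -?Ev //; lia.
have rin : r \in rs by rewrite mem_filter rr mem_iota /= ltn_pmod.
have hix : index r rs < nS by rewrite /nS index_mem.
exists (Ordinal hix), i.
by rewrite /pn /rk /= nth_index.
Qed.

Lemma inQ'_lt (q : Qt) : inQ' pQ q = (val (val q) < B).
Proof.
apply/idP/idP => [hq|hq].
  rewrite ltnNge; apply/negP => hb.
  have [k [i E]] := seed_of hb (valP q).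
  have hi : i < 5.
    have := ltn_ord (val q); rewrite -E /pn /M; nia.
  move/forallP: hq => /(_ k) /forallP /(_ (Ordinal hi)) /eqP; apply.
  by apply/val_inj/val_inj.
apply/forallP => k; apply/forallP => i; apply/eqP => E.
by move: hq; rewrite -E /= /pn; lia.
Qed.


Lemma RbS1 a b q : T <= a -> T <= b -> Rb (a + N * q) (b + N * q) = Rb a b.
Proof. by case: (@per2_mul _ _ _ q RbN) => [P1 _]; apply: P1. Qed.
Lemma RbS2 a b q : a + T <= b -> Rb a (b + N * q) = Rb a b.
Proof. by case: (@per2_mul _ _ _ q RbN) => [_ [P2 _]]; apply: P2. Qed.
Lemma RbS3 a b q : b + T <= a -> Rb (a + N * q) b = Rb a b.
Proof. by case: (@per2_mul _ _ _ q RbN) => [_ [_ P3]]; apply: P3. Qed.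

Lemma pn_shift k m q : pn k (m + q) = pn k m + N * q.
Proof. rewrite /pn; lia. Qed.

Lemma Rb_seed_shift k l m m' q : Rb (pn k (m + q)) (pn l (m' + q)) = Rb (pn k m) (pn l m').
Proof. by rewrite !pn_shift RbS1 //; have := BT; rewrite /pn; lia. Qed.

Notation hrQ := (@hat_rho _ rhoQ _ pQ).

Lemma Rb_far k l d : 2 <= d -> Rb (pn k 0) (pn l d) = Rb (pn k 0) (pn l 2).
Proof.
move=> hd; have -> : d = 2 + (d - 2) by lia.
by rewrite pn_shift RbS2 //; have := rk_lt k; have := N_gt; rewrite /pn; lia.
Qed.
Lemma Rb_farl k l d : 2 <= d -> Rb (pn k d) (pn l 0) = Rb (pn k 2) (pn l 0).
Proof.
move=> hd; have -> : d = 2 + (d - 2) by lia.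
by rewrite pn_shift RbS3 //; have := rk_lt l; have := N_gt; rewrite /pn; lia.
Qed.

Lemma seedR k l m m' : Rb (pn k m) (pn l m') = hrQ (inr (k, m)) (inr (l, m')).
Proof.
case: (ltngtP m m') => h.
- have -> : Rb (pn k m) (pn l m') = Rb (pn k 0) (pn l (m' - m)).
    by rewrite -(Rb_seed_shift k l 0 (m' - m) m); congr Rb; congr pn; lia.
  case: (eqVneq m' m.+1) => e.
    by rewrite (hat_up rhoQ pQ k l e) /rhoQ /=; congr Rb; congr pn; lia.
  by rewrite Rb_far ?(hat_far rhoQ pQ k l (_ : m.+2 <= m')) //; lia.
- have -> : Rb (pn k m) (pn l m') = Rb (pn k (m - m')) (pn l 0).
    by rewrite -(Rb_seed_shift k l (m - m') 0 m'); congr Rb; congr pn; lia.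
  case: (eqVneq m m'.+1) => e.
    by rewrite (hat_dn rhoQ pQ k l (esym e)) /rhoQ /=; congr Rb; congr pn; lia.
  by rewrite Rb_farl ?(hat_farl rhoQ pQ k l (_ : m'.+2 <= m)) //; lia.
- subst m'; rewrite (hat_eq rhoQ pQ k l (erefl m)) /rhoQ /=.
  by rewrite -(Rb_seed_shift k l 0 0 m).
Qed.

Lemma rhoQ_pQ k l i j : rhoQ (pQ k i) (pQ l j) = hrQ (inr (k, val i)) (inr (l, val j)).
Proof. exact: seedR. Qed.

Lemma Rb_q_seed v k m : v < B -> 0 < m -> Rb v (pn k m) = Rb v (pn k 1).
Proof.
move=> hv hm; have -> : m = 1 + (m - 1) by lia.
by rewrite pn_shift RbS2 //; have := N_gt; rewrite /pn; lia.
Qed.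
Lemma Rb_seed_q v k m : v < B -> 0 < m -> Rb (pn k m) v = Rb (pn k 1) v.
Proof.
move=> hv hm; have -> : m = 1 + (m - 1) by lia.
by rewrite pn_shift RbS3 //; have := N_gt; rewrite /pn; lia.
Qed.


Definition encF (a : hatQ pQ) : nat :=
  match a with inl q => val (val (val q)) | inr (k, m) => pn k m end.

Lemma encF_rep a : rep (encF a).
Proof. by case: a => [q|[k m]] /=; [exact: (valP (val q)) | exact: pn_rep]. Qed.

Definition g (a : hatQ pQ) : X := xof (rep_Lb (encF_rep a)).

Lemma xof_eq i j (hi : Lb i) (hj : Lb j) : i = j -> xof hi = xof hj.
Proof. by move=> e; subst j; apply: xof_irr. Qed.

Lemma encF_inj : injective encF.
Proof.
have hlt : forall q : {q : Qt | inQ' pQ q}, val (val (val q)) < B.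
  by move=> q; rewrite -inQ'_lt; exact: (valP q).
move=> [q|[k m]] [q'|[l m']] /= E.
- by congr inl; apply/val_inj/val_inj/val_inj.
- by have := hlt q; move: E; rewrite /= /pn; lia.
- by have := hlt q'; move: E; rewrite /= /pn; lia.
- by have [-> ->] := pn_inj E.
Qed.

Lemma g_inj : injective g.
Proof.
move=> a b E; apply: encF_inj; apply: rep_uniq; try exact: encF_rep.
by apply/(EbP (rep_Lb (encF_rep a)) (rep_Lb (encF_rep b))).
Qed.

Lemma encF_onto m : rep m -> exists a, encF a = m.
Proof.
move=> rm; case: (ltnP m B) => hm.
  have hmM : m < M by rewrite /M; lia.
  have hin : inQ' pQ (exist _ (Ordinal hmM) rm : Qt) by rewrite inQ'_lt.
  by exists (inl (exist (fun q : Qt => is_true (inQ' pQ q)) _ hin)).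
by have [k [i E]] := seed_of hm rm; exists (inr (k, i)).
Qed.

Lemma phi_xof u (hu : L u) : exists h : Lb (size u), phi (exist _ u hu) = xof h.
Proof.
have Eu := unary_nseq u; move: hu; rewrite Eu => hu; rewrite size_nseq.
exists (proj1 (hAL _) hu); exact: xof_any.
Qed.

Lemma g_surj x : exists a, g a = x.
Proof.
have [[u hu] <-] := hsurj x.
have [h0 ->] := phi_xof hu.
set i0 := size u in h0 *.
have ex : exists j, Lb j && Eb j i0 by exists i0; rewrite h0 Eb_refl.
case: (ex_minnP ex) => m /andP [lm em] mmin.
have rm : rep m.
  apply/repP; split=> // j hj; apply/negP => /andP [lj ej].
  have := mmin j; rewrite lj (Eb_trans ej em) => /(_ isT); lia.
have [a Ea] := encF_onto rm; exists a.
rewrite /g (xof_eq (rep_Lb (encF_rep a)) lm Ea).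
exact/(EbP lm h0).
Qed.

Lemma g_R a b : R (g a) (g b) <-> hrQ a b.
Proof.
rewrite /g -RbP.
have hv : forall q : {q : Qt | inQ' pQ q}, val (val (val q)) < B.
  by move=> q; rewrite -inQ'_lt; exact: (valP q).
case: a => [q|[k m]]; case: b => [q'|[l m']] //=.
- case: eqP => [->|h]; first by [].
  by rewrite Rb_q_seed ?hv //; lia.
- case: eqP => [->|h]; first by [].
  by rewrite Rb_seed_q ?hv //; lia.
- by rewrite seedR.
Qed.


Lemma FA_ok : FA_foundational rhoQ pQ.
Proof.
split.
  move=> [k i] [l j] /(congr1 (fun z : Qt => val (val z))) /= E.
  by have [-> e] := pn_inj E; congr pair; apply/val_inj.
move=> k l; split; [|split; [|split; [|split; [|split; [|split]]]]].
- by move=> i j; rewrite !rhoQ_pQ !(hat_eq rhoQ pQ k l (erefl _)).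
- by move=> i i' j j' e1 e2; rewrite !rhoQ_pQ (hat_up rhoQ pQ k l e1) (hat_up rhoQ pQ k l e2).
- by move=> i i' j j' e1 e2; rewrite !rhoQ_pQ (hat_dn rhoQ pQ k l (esym e1)) (hat_dn rhoQ pQ k l (esym e2)).
- move=> i j i' j' h1 h2; have h1' : i.+2 <= j by lia.
  have h2' : i'.+2 <= j' by lia.
  by rewrite !rhoQ_pQ (hat_far rhoQ pQ k l h1') (hat_far rhoQ pQ k l h2').
- move=> i j i' j' h1 h2; have h1' : i.+2 <= j by lia.
  have h2' : i'.+2 <= j' by lia.
  by rewrite !rhoQ_pQ (hat_farl rhoQ pQ k l h1') (hat_farl rhoQ pQ k l h2').
- move=> q; rewrite inQ'_lt => hq i j hi hj.
  by rewrite /rhoQ /= Rb_q_seed // [RHS]Rb_q_seed.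
- move=> q; rewrite inQ'_lt => hq i j hi hj.
  by rewrite /rhoQ /= Rb_seed_q // [RHS]Rb_seed_q.
Qed.



Lemma rhoQ_R (a b : Qt) : rhoQ a b <-> R (xof (rep_Lb (valP a))) (xof (rep_Lb (valP b))).
Proof. exact: RbP. Qed.

Lemma PO_ok : partial_order (fun a b : Qt => rhoQ a b).
Proof.
case: hPO => [Rr [Ra Rt]].
split; [|split].
- by move=> a; apply/rhoQ_R.
- move=> a b /rhoQ_R h1 /rhoQ_R h2.
  have e := Ra _ _ h1 h2.
  apply/val_inj/val_inj/rep_uniq; try exact: (valP a); try exact: (valP b).
  exact/(EbP (rep_Lb (valP a)) (rep_Lb (valP b))).
- move=> a b c /rhoQ_R h1 /rhoQ_R h2; apply/rhoQ_R; exact: Rt h2.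
Qed.

Lemma seed_same_far k : Rb (pn k 0) (pn k 2) = Rb (pn k 0) (pn k 1).
Proof.
have -> : 2 = 1 + 1 by [].
by rewrite pn_shift RbS2 //; have := N_gt; rewrite /pn; lia.
Qed.
Lemma seed_same_farl k : Rb (pn k 2) (pn k 0) = Rb (pn k 1) (pn k 0).
Proof.
have -> : 2 = 1 + 1 by [].
by rewrite pn_shift RbS3 //; have := N_gt; rewrite /pn; lia.
Qed.

Lemma class_ok k : seed_antichain rhoQ pQ k \/ seed_ascending rhoQ pQ k \/ seed_descending rhoQ pQ k.
Proof.
have neq : forall i i' : 'I_5, i' = i.+1 :> nat -> pQ k i != pQ k i'.
  move=> i i' e; apply/negP => /eqP /(congr1 (fun z : Qt => val (val z))) /= E.
  by have [_ e'] := pn_inj E; lia.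
case up: (Rb (pn k 0) (pn k 1)).
  right; left => i i' e; apply/andP; split; last exact: neq.
  rewrite rhoQ_pQ (hat_up rhoQ pQ k k e) /rhoQ /=.
  by rewrite up.
case dn: (Rb (pn k 1) (pn k 0)).
  right; right => i i' e; apply/andP; split; last by rewrite eq_sym; exact: neq.
  rewrite rhoQ_pQ (hat_dn rhoQ pQ k k (esym e)) /rhoQ /=.
  by rewrite dn.
left => i j hij; rewrite rhoQ_pQ.
case: (ltngtP (val i) (val j)) => h.
- case: (eqVneq (val j) (val i).+1) => e.
    by rewrite (hat_up rhoQ pQ k k e) /rhoQ /= up.
  have h2 : (val i).+2 <= val j by move/eqP: e; lia.
  by rewrite (hat_far rhoQ pQ k k h2) /rhoQ /= seed_same_far up.
- case: (eqVneq (val i) (val j).+1) => e.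
    by rewrite (hat_dn rhoQ pQ k k (esym e)) /rhoQ /= dn.
  have h2 : (val j).+2 <= val i by move/eqP: e; lia.
  by rewrite (hat_farl rhoQ pQ k k h2) /rhoQ /= seed_same_farl dn.
- by move: hij; rewrite (val_inj h) eqxx.
Qed.

Lemma fwd_main : exists (Q : finType) (rho : rel Q) (n : nat) (p : 'I_n -> 'I_5 -> Q),
     FA_foundational rho p /\
     partial_order (fun a b : Q => rho a b) /\
     (forall k : 'I_n,
        seed_antichain rho p k \/ seed_ascending rho p k \/ seed_descending rho p k) /\
     exists f : X -> hatQ p,
       bijective f /\ forall x y, R x y <-> @hat_rho Q rho n p (f x) (f y).
Proof.
exists Qt, rhoQ, nS, pQ; split; [exact: FA_ok|split; [exact: PO_ok|split; [exact: class_ok|]]].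
pose f := fun x => proj1_sig (constructive_indefinite_description _ (g_surj x)).
have gf : forall x, g (f x) = x by move=> x; rewrite /f; case: constructive_indefinite_description.
exists f; split.
  by exists g => // a; apply: g_inj; rewrite gf.
by move=> x y; rewrite -g_R !gf.
Qed.

End Fwd.

Theorem theorem5p10 (X : Type) (R : X -> X -> Prop) :
  partial_order R ->
  (unary_FA_presentable R <->
   exists (Q : finType) (rho : rel Q) (n : nat) (p : 'I_n -> 'I_5 -> Q),
     FA_foundational rho p /\
     partial_order (fun a b : Q => rho a b) /\
     (forall k : 'I_n,
        seed_antichain rho p k \/ seed_ascending rho p k \/ seed_descending rho p k) /\
     exists f : X -> hatQ p,
       bijective f /\ forall x y, R x y <-> @hat_rho Q rho n p (f x) (f y)).
Proof.
move=> hPO; split.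
- move=> [L [phi [hL [hs [hE hR]]]]].
  have [AL hAL] := of_reg1 hL.
  have [AE hAE] := of_reg2 hE.
  have [AR hAR] := of_reg2 hR.
  exact: (fwd_main hPO hAL hAE hAR hs).
- move=> [Q [rho [n [p [_ [_ [_ [f [hf hiso]]]]]]]]].
  exact: (back hf hiso).
Qed.
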